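(* Let $\{G_i\}$ be a family of graphs with common induced subgraph $J$, embedded as $J_i\subseteq G_i$, such that $\{(G_i|J_i)\}$ is isometric, and let $H=\amalg\{(G_i|J_i)\}$. If every $G_i$ is connected and bipartite, then $\dim_l(H)=1$.
   Context: $d_G$ is shortest-path distance. A vertex $w$ distinguishes an edge $uv$ if $d(w,u)\neq d(w,v)$; $\dim_l(G)$ is the minimum size of a set $B\subseteq V(G)$ such that every edge of $G$ is distinguished by a vertex of $B$. $J$ is a common induced subgraph of each $G_i$ via injective maps $\iota_i:V(J)\to V(G_i)$ with $\iota_i(x)\iota_i(y)\in E(G_i)$ iff $xy\in E(J)$; $J_i$ is the induced image and $x^i=\iota_i(x)$. $H=\amalg\{(G_i|J_i)\}$ is obtained from the disjoint union of the $G_i$ by identifying, for each $x\in V(J)$, all $x^i$ into one vertex. The family is isometric if $d_{G_i}(a^i,b^i)=d_{G_j}(a^j,b^j)$ for all $i,j$ and $a,b\in V(J)$. *)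

(* Defs.v *)
From mathcomp Require Import all_boot.

Set Implicit Arguments.
Unset Strict Implicit.
Unset Printing Implicit Defensive.

Section Graphs.
Variable T : finType.
Implicit Types (e : rel T).

Definition simple_graph e := symmetric e /\ irreflexive e.

Fixpoint reach e (n : nat) (x : T) : {set T} :=
  if n is n'.+1 then
    reach e n' x :|: [set y | [exists z in reach e n' x, e z y]]
  else [set x].

(* shortest-path distance d(x,y): the least n < #|T| with y within n steps
   of x (every shortest path has length < #|T|); the value #|T| plays the
   role of "infinity" for unreachable y. *)
Definition dist e (x y : T) : nat :=
  find (fun n => y \in reach e n x) (iota 0 #|T|).

Definition connected e := forall x y : T, connect e x y.

Definition bipartite e :=
  exists c : T -> bool, forall u v, e u v -> c u != c v.

Definition distinguishes e (w u v : T) := dist e w u != dist e w v.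

Definition edge_resolving e (B : {set T}) : bool :=
  [forall u, forall v, e u v ==> [exists w in B, distinguishes e w u v]].

Definition edge_metric_dim e : nat :=
  \big[minn/#|T|]_(B : {set T} | edge_resolving e B) #|B|.

End Graphs.

Section Amalgam.
Variables (I : finType) (V : I -> finType) (VJ : finType)
          (E : forall i, rel (V i)) (iota_ : forall i, VJ -> V i).

Definition Vout (i : I) := {v : V i | v \notin codom (iota_ i)}.

(* vertex set of H: the vertices of J (each x standing for the identified
   class {x^i}) together with the disjoint union of the G_i - J_i *)
Definition amalgV : finType := (VJ + {i : I & Vout i})%type.

Definition toH (i : I) (v : V i) : amalgV :=
  match boolP (v \in codom (iota_ i)) with
  | AltTrue h => inl (iinv h)
  | AltFalse h => inr (Tagged Vout (exist _ v h : Vout i))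
  end.

Definition amalgE : rel amalgV := fun a b =>
  [exists i : I, exists u : V i, exists v : V i,
     [&& E u v, toH u == a & toH v == b]].

End Amalgam.

(* Main.v *)
Require Import Defs.
From mathcomp Require Import all_boot.
From Stdlib Require Import ClassicalEpsilon.
Set Implicit Arguments.

Section Gen.
Variables (T : finType) (e : rel T).

Lemma reach_path x p : path e x p -> last x p \in reach e (size p) x.
Proof.
elim/last_ind: p => [|p z IH]; first by rewrite /= set11.
rewrite rcons_path last_rcons size_rcons => /andP[/IH H ez] /=.
apply/setUP; right; rewrite inE; apply/existsP; exists (last x p).
by rewrite H ez.
Qed.

Lemma connect_reach x y : connect e x y -> exists2 k, k < #|T| & y \in reach e k x.
Proof.
case/connectP=> p pp ->; case: (shortenP pp) => p' pp' up' _.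
exists (size p'); last exact: reach_path.
have := max_card (mem (x :: p')); by rewrite (card_uniqP up').
Qed.

Lemma dist_spec x y : (exists2 k, k < #|T| & y \in reach e k x) ->
  [/\ dist e x y < #|T|, y \in reach e (dist e x y) x &
      forall k, k < dist e x y -> y \notin reach e k x].
Proof.
case=> k kT yk.
have hx : has (fun n => y \in reach e n x) (iota 0 #|T|).
  by apply/hasP; exists k => //; rewrite mem_iota.
have lt : dist e x y < #|T| by rewrite /dist -{2}(size_iota 0 #|T|) -has_find.
split => //.
  by have := nth_find 0 hx; rewrite nth_iota.
move=> j jd; have := before_find 0 jd; rewrite nth_iota //.
  by move=> ->.
exact: ltn_trans jd lt.
Qed.

Variable c : T -> bool.
Hypothesis hc : forall u v, e u v -> c u != c v.

Lemma reach_parity x n y : y \in reach e n x ->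
  (forall k, k < n -> y \notin reach e k x) -> c y = c x (+) odd n.
Proof.
elim: n y => [|n IH] y /=.
  by rewrite inE => /eqP-> _; rewrite addbF.
case/setUP => [yn|]; first by move=> /(_ n (ltnSn n)); rewrite yn.
rewrite inE => /existsP[z /andP[zn ezy]] hmin.
have Hz : c z = c x (+) odd n.
  apply: IH => // k kn; apply/negP => zk.
  have : y \in reach e k.+1 x.
    by apply/setUP; right; rewrite inE; apply/existsP; exists z; rewrite zk ezy.
  by apply/negP; apply: hmin.
have := hc ezy; rewrite Hz; case: (c y); case: (c x); case: (odd n) => //.
Qed.

Lemma dist_parity x y : connect e x y -> c y = c x (+) odd (dist e x y).
Proof.
move/connect_reach/dist_spec => [_ H1 H2]; exact: reach_parity H1 H2.
Qed.

End Gen.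
Section Am.
Variables (I : finType) (V : I -> finType) (VJ : finType)
  (E : forall i, rel (V i)) (iota_ : forall i, VJ -> V i).
Hypothesis inj : forall i, injective (iota_ i).

Lemma toH_iota i x : toH iota_ (iota_ i x) = inl x.
Proof.
rewrite /toH; match goal with |- context [boolP ?b] => destruct (boolP b) as [h|h] end.
  f_equal; apply: inj; exact: f_iinv.
by exfalso; rewrite codom_f in h.
Qed.

Lemma toH_out i (v : V i) (h : v \notin codom (iota_ i)) :
  toH iota_ v = inr (Tagged (Vout iota_) (exist _ v h : Vout iota_ i)).
Proof.
rewrite /toH; match goal with |- context [boolP ?b] => destruct (boolP b) as [h'|h'] end.
  by exfalso; rewrite h' in h.
by do 2 f_equal; apply: val_inj.
Qed.
End Am.

Lemma bigmin_le (T : eqType) (s : seq T) (P : pred T) (F : T -> nat) d i :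
  i \in s -> P i -> \big[minn/d]_(j <- s | P j) F j <= F i.
Proof.
elim: s => //= a s IH; rewrite in_cons big_cons => /orP[/eqP<-|/IH H] Pi.
  by rewrite Pi geq_minl.
case: (P a); last exact: H Pi.
exact: leq_trans (geq_minr _ _) (H Pi).
Qed.

Unset Implicit Arguments.

Theorem corollary1
  (I : finType) (V : I -> finType) (VJ : finType)
  (E : forall i, rel (V i)) (EJ : rel VJ) (iota_ : forall i, VJ -> V i) :
  0 < #|I| ->
  0 < #|VJ| ->
  simple_graph EJ ->
  (forall i, simple_graph (E i)) ->
  (forall i, 1 < #|V i|) ->
  (* J is an induced subgraph of each G_i via iota_ i *)
  (forall i, injective (iota_ i)) ->
  (forall i x y, E i (iota_ i x) (iota_ i y) = EJ x y) ->
  (* the family is isometric *)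
  (forall i j (a b : VJ),
      dist (E i) (iota_ i a) (iota_ i b) = dist (E j) (iota_ j a) (iota_ j b)) ->
  (forall i, connected (E i)) ->
  (forall i, bipartite (E i)) ->
  edge_metric_dim (@amalgE I V VJ E iota_) = 1.
Proof.
move=> I0 J0 sJ sG V1 inj hind iso conn bip.
pose H := @amalgE I V VJ E iota_.
have [i0 _] := card_gt0P I0.
have [x0 _] := card_gt0P J0.
have cf : forall i, {c : V i -> bool | forall u v, E i u v -> c u != c v}.
  by move=> i; apply: constructive_indefinite_description; exact: bip.
pose c i v := sval (cf i) v (+) sval (cf i) (iota_ i x0).
have hc : forall i u v, E i u v -> c i u != c i v.
  move=> i u v /(svalP (cf i)); rewrite /c.
  by case: (sval _ u); case: (sval _ v); case: (sval _ _).
have cJ : forall i x, c i (iota_ i x) = odd (dist (E i) (iota_ i x0) (iota_ i x)).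
  move=> i x; have c0 : c i (iota_ i x0) = false by rewrite /c addbb.
  by rewrite (@dist_parity _ _ _ (hc i) _ _ (conn i (iota_ i x0) (iota_ i x))) c0.
pose cH (a : amalgV iota_) : bool :=
  match a with inl x => c i0 (iota_ i0 x) | inr t => c (tag t) (sval (tagged t)) end.
have cHt : forall i v, cH (toH iota_ v) = c i v.
  move=> i v; case: (boolP (v \in codom (iota_ i))) => h.
    by move/codomP: h => [x ->]; rewrite (@toH_iota _ _ _ _ inj) /= !cJ (iso i0 i).
  by rewrite (@toH_out _ _ _ _ _ _ h).
have hcH : forall a b, H a b -> cH a != cH b.
  move=> a b /existsP[i /existsP[u /existsP[v /and3P[e /eqP<- /eqP<-]]]].
  by rewrite !cHt; exact: hc.
have toHc : forall i u v, connect (E i) u v -> connect H (toH iota_ u) (toH iota_ v).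
  move=> i u v /connectP[p pp ->]; elim: p u pp => [|q p IH] u /=; first by move=> _; exact: connect0.
  case/andP => epq pp; apply: connect_trans (IH _ pp); apply: connect1; apply/existsP; exists i.
  by apply/existsP; exists u; apply/existsP; exists q; rewrite epq !eqxx.
have surj : forall a, exists i, exists v : V i, toH iota_ v = a.
  case=> [x|[i [v h]]]; first by exists i0, (iota_ i0 x); exact: (@toH_iota _ _ _ _ inj).
  by exists i, v; exact: (@toH_out _ _ _ _ _ _ h).
have connH : forall a b, connect H a b.
  move=> a b; have [i [u <-]] := surj a; have [j [v <-]] := surj b.
  apply: (connect_trans (y:=inl x0)).
    by rewrite -((@toH_iota _ _ _ _ inj i x0)); apply: toHc; exact: conn.
  by rewrite -((@toH_iota _ _ _ _ inj j x0)); apply: toHc; exact: conn.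
have res : edge_resolving H [set inl x0].
  apply/forallP => u; apply/forallP => v; apply/implyP => huv.
  apply/existsP; exists (inl x0); rewrite set11 /distinguishes /=.
  move: (hcH _ _ huv).
  rewrite (@dist_parity _ _ _ hcH _ _ (connH (inl x0) u)) (@dist_parity _ _ _ hcH _ _ (connH (inl x0) v)).
  by apply: contra_neq => ->.
have [eu [ev euv]] : exists u v, H u v.
  have [u [v [_ _ uv]]] := card_gt1P (V1 i0).
  case/connectP: (conn i0 u v) => [[|z p]] /=; first by move=> _ e; rewrite e eqxx in uv.
  case/andP => ez _ _; exists (toH iota_ u), (toH iota_ z).
  by apply/existsP; exists i0; apply/existsP; exists u; apply/existsP; exists z; rewrite ez !eqxx.
rewrite /edge_metric_dim; apply/eqP; rewrite eqn_leq; apply/andP; split.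
  have := @bigmin_le _ (index_enum _) (edge_resolving H) (fun B => #|B|) #|amalgV iota_| _ (mem_index_enum _) res.
  by rewrite cards1.
apply: (big_ind (fun n => 0 < n)).
- by apply/card_gt0P; exists (inl x0).
- by move=> m n m0 n0; rewrite leq_min m0 n0.
move=> B /forallP/(_ eu)/forallP/(_ ev)/implyP/(_ euv)/existsP[w /andP[wB _]].
by apply/card_gt0P; exists w.
Qed.
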